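(* Let $n\ge2$, $1<p<\infty$, $R>0$, $\bar\beta>0$ a constant, and let $f$ be as in the context. Then there exists a positive constant $C=C(R)$ such that $f(r)\le C(R)\,r$ for all $0\le r\le R$.
   Context: $F:\mathbb R^n\to[0,\infty)$ is convex, even, positively 1-homogeneous, with $a|\xi|\le F(\xi)\le b|\xi|$ ($0<a\le b$), $F\in C^2(\mathbb R^n\setminus\{0\})$, Hessian of $F^p$ positive definite off the origin; $F^o(v)=\sup_{\xi\ne0}\langle\xi,v\rangle/F(\xi)$ and $\mathcal W_R=\{x:F^o(x)<R\}$. $\ell_1(\bar\beta,\mathcal W_R)=\inf_{v\in W^{1,p}(\mathcal W_R),v\not\equiv0}\frac{\int_{\mathcal W_R}F^p(\nabla v)dx+\bar\beta\int_{\partial\mathcal W_R}|v|^pF(\nu)d\mathcal H^{n-1}}{\int_{\mathcal W_R}|v|^pdx}$ ($\nu$ the Euclidean outer normal). It is known that the positive first eigenfunction on $\mathcal W_R$ has the form $v(x)=\rho(F^o(x))$, where $\rho\in C^\infty(]0,R[)\cap C^1([0,R])$ is positive, decreasing, and solves $-(p-1)(-\rho'(r))^{p-2}\rho''(r)+\frac{n-1}{r}(-\rho'(r))^{p-1}=\ell_1(\bar\beta,\mathcal W_R)\rho(r)^{p-1}$ for $r\in]0,R[$, $\rho'(0)=0$, $-(-\rho'(R))^{p-1}+\bar\beta\rho(R)^{p-1}=0$. Define $f(r)=\dfrac{(-\rho'(r))^{p-1}}{\rho(r)^{p-1}}$ for $r\in[0,R]$. *)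

(* Defs.v *)
From mathcomp Require Import all_boot all_order all_algebra.
From mathcomp Require Import all_classical all_reals all_analysis.
Set Implicit Arguments. Unset Strict Implicit. Unset Printing Implicit Defensive.
Import Order.TTheory GRing.Theory Num.Theory.
Import numFieldNormedType.Exports.
Local Open Scope ring_scope.

(* f(r) = (-rho'(r))^(p-1) / rho(r)^(p-1), with drho playing the role of rho'
   (the derivative of rho, continuously extended to the closed interval). *)
Definition fquot (R : realType) (p : R) (rho drho : R -> R) (r : R) : R :=
  ((- drho r) `^ (p - 1)) / ((rho r) `^ (p - 1)).

(* Main.v *)
Require Import Defs.
From mathcomp Require Import all_boot all_order all_algebra.
From mathcomp Require Import all_classical all_reals all_analysis.
From mathcomp Require Import ring lra.
Import Order.TTheory GRing.Theory Num.Theory.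
Import numFieldNormedType.Exports.
Local Open Scope classical_set_scope.
Local Open Scope ring_scope.

Lemma nincr_derive1_le0 (R : realType) (f : R -> R) (a b x : R) :
  derivable f x 1 ->
  (forall u v, a <= u -> u <= v -> v <= b -> f v <= f u) ->
  a < x -> x < b -> derive1 f x <= 0.
Proof.
move=> df decrf ax xb.
rewrite derive1E.
apply: limr_le; first exact: df.
have e0 : 0 < Num.min (x - a) (b - x) by rewrite lt_min !subr_gt0 ax xb.
near=> h.
have h0 : h != 0%R by near: h; exact: nbhs_dnbhs_neq.
have hlt : `|h| < Num.min (x - a) (b - x) by near: h; exact: dnbhs0_lt.
move: hlt; rewrite lt_min => /andP[h1 h2].
have h1' : - h < x - a by apply: le_lt_trans h1; rewrite -normrN ler_norm.
have h2' : h < b - x by apply: le_lt_trans h2; rewrite ler_norm.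
rewrite scaler1.
move: h0; rewrite neq_lt => /orP[hn|hp].
- rewrite /GRing.scale /= nmulr_rle0 ?invr_lt0// subr_ge0.
  apply: decrf; lra.
- rewrite /GRing.scale /= pmulr_rle0 ?invr_gt0// subr_le0.
  apply: decrf; lra.
Unshelve. all: end_near. Qed.
Lemma near0_small (R : realType) (g : R -> R) (Rad q X r : R) :
  0 < Rad -> {within `[0, Rad], continuous g} -> g 0 = 0 ->
  (forall t, 0 < t < Rad -> 0 <= - g t) -> 0 < q -> 0 < X -> 0 < r ->
  exists e, [/\ 0 < e, e < r, e < Rad & (- g e) `^ q < X].
Proof.
move=> R0 cg g0 gneg q0 X0 r0.
have [_ cg0 _] := (continuous_within_itvP g R0).1 cg.
have eta0 : 0 < X `^ q^-1 by apply: powR_gt0.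
move: cg0 => /cvgrPdist_lt/(_ _ eta0); rewrite g0 => hnear.
near (0:R)^'+ => e.
have e0 : 0 < e by near: e; exact: nbhs_right_gt.
have er : e < r by near: e; exact: nbhs_right_lt.
have eR : e < Rad by near: e; exact: nbhs_right_lt.
have he : `|0 - g e| < X `^ q^-1 by near: e; exact: hnear.
exists e; split => //.
have ge : 0 <= - g e by apply: gneg; rewrite e0 eR.
have -> : X = (X `^ q^-1) `^ q.
  by rewrite -powRrM mulVf ?gt_eqF// powRr1// ltW.
apply: gt0_ltr_powR => //; rewrite ?nnegrE//.
  exact: ltW.
by rewrite sub0r normrN -normrN ger0_norm in he.
Unshelve. all: end_near. Qed.
Lemma phi_derive (R : realType) (H : R -> R) (A x : R) :
  derivable H x 1 ->
  is_derive x 1 (fun t => H t - A * t) (derive1 H x - A).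
Proof.
move=> dH.
have h1 := derivableP dH.
rewrite derive1E.
apply: is_deriveB.
have h2 : is_derive x 1 (A *: (@id R)) (A *: (1:R)) by exact: is_deriveZ.
by move: h2; rewrite /GRing.scale /= mulr1.
Qed.

Lemma key_bound (R : realType) (H g : R -> R) (Rad A q : R) :
  0 < Rad -> 0 < q -> 0 <= A ->
  {within `[0, Rad], continuous g} -> g 0 = 0 ->
  (forall t, 0 < t < Rad -> 0 <= - g t) ->
  (forall t, 0 < t < Rad -> derivable H t 1) ->
  (forall t, 0 < t < Rad -> derive1 H t <= A) ->
  (forall t, 0 < t < Rad -> H t = (- g t) `^ q) ->
  forall r, 0 < r < Rad -> (- g r) `^ q <= A * r.
Proof.
move=> R0 q0 A0 cg g0 gneg dH dHA Heq r /andP[r0 rR].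
rewrite leNgt; apply/negP => hlt.
have X0 : 0 < (- g r) `^ q - A * r by rewrite subr_gt0.
have [e [e0 er eR he]] := @near0_small _ g Rad q _ r R0 cg g0 gneg q0 X0 r0.
pose phi := fun t => H t - A * t.
have hmono : phi r <= phi e.
  apply: (@ler0_derive1_nincr _ phi e r) => //; last exact: ltW.
  - move=> x; rewrite in_itv /= => /andP[ex xr].
    have hx : 0 < x < Rad by apply/andP; split; lra.
    rewrite /phi; have hd := @phi_derive _ H A x (dH x hx); exact: ex_derive.
  - move=> x; rewrite in_itv /= => /andP[ex xr].
    have hx : 0 < x < Rad by apply/andP; split; lra.
    have hd := @phi_derive _ H A x (dH x hx).
    rewrite /phi derive1E derive_val.
    have := dHA x hx; lra.
  - apply: continuous_in_subspaceT => x; rewrite inE /= in_itv /= => /andP[ex xr].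
    have hx : 0 < x < Rad by apply/andP; split; lra.
    apply/differentiable_continuous/derivable1_diffP.
    rewrite /phi; have hd := @phi_derive _ H A x (dH x hx); exact: ex_derive.
have hr : 0 < r < Rad by apply/andP; split.
have heR : 0 < e < Rad by apply/andP; split.
move: hmono; rewrite /phi (Heq r hr) (Heq e heR).
have : 0 <= A * e by apply: mulr_ge0 => //; exact: ltW.
lra.
Qed.

Theorem theorem4p6 (R : realType) (n : nat) (p Rad beta ell : R)
  (rho drho : R -> R) :
  (2 <= n)%N -> 1 < p -> 0 < Rad -> 0 < beta ->
  (* ell stands for the first eigenvalue ell_1(beta, W_Rad) (> 0) *)
  0 < ell ->
  (* rho in C^infty(]0,Rad[) *)
  (forall (k : nat) (r : R), 0 < r < Rad ->
      derivable (iter k (@derive1 R R) rho) r 1) ->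
  (* rho in C^1([0,Rad]) with derivative drho *)
  {within `[0, Rad], continuous rho} ->
  {within `[0, Rad], continuous drho} ->
  (forall r : R, 0 < r < Rad -> derive1 rho r = drho r) ->
  (* rho positive and decreasing on [0,Rad] *)
  (forall r : R, 0 <= r <= Rad -> 0 < rho r) ->
  (forall x y : R, 0 <= x -> x <= y -> y <= Rad -> rho y <= rho x) ->
  (* the ODE on ]0,Rad[ *)
  (forall r : R, 0 < r < Rad ->
      - (p - 1) * (- drho r) `^ (p - 2) * derive1 (derive1 rho) r
      + (n.-1)%:R / r * (- drho r) `^ (p - 1)
      = ell * (rho r) `^ (p - 1)) ->
  (* boundary conditions *)
  drho 0 = 0 ->
  - (- drho Rad) `^ (p - 1) + beta * (rho Rad) `^ (p - 1) = 0 ->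
  exists C : R, 0 < C /\
    forall r : R, 0 <= r <= Rad -> fquot p rho drho r <= C * r.
Proof.
move=> n2 p1 R0 b0 l0 dk crho cdrho drhoE rpos rdec ode d0 bc.
set rp := derive1 rho.
set rpp := derive1 rp.
have drho1 : forall t, 0 < t < Rad -> derivable rho t 1 by move=> t ht; exact: (dk 0%N t ht).
have drp1 : forall t, 0 < t < Rad -> derivable rp t 1 by move=> t ht; exact: (dk 1%N t ht).
have hw : forall t, 0 < t < Rad -> 0 <= - drho t.
  move=> t ht; have /andP[t0 tR] := ht; rewrite -drhoE // oppr_ge0.
  apply: (@nincr_derive1_le0 _ rho 0 Rad) => //; first exact: drho1.
set q := p - 1.
have q0 : 0 < q by rewrite /q subr_gt0.
set A := ell * (rho 0) `^ q.
have A0 : 0 <= A by apply: mulr_ge0; [exact: ltW | exact: powR_ge0].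
have bound : forall t, 0 < t < Rad ->
    q * (- rp t) `^ (p - 2) * (- rpp t) <= A.
  move=> t ht; have := ode t ht; rewrite -(drhoE t ht) -/rp -/rpp => o.
  have -> : q * (- rp t) `^ (p - 2) * (- rpp t)
      = ell * (rho t) `^ (p - 1) - (n.-1)%:R / t * (- rp t) `^ (p - 1).
    by rewrite -o /q; ring.
  have /andP[t0 tR] := ht.
  have h1 : 0 <= (n.-1)%:R / t * (- rp t) `^ (p - 1).
    by apply: mulr_ge0; [apply: divr_ge0 => //; exact: ltW | exact: powR_ge0].
  have h2 : ell * rho t `^ (p - 1) <= A.
    rewrite /A /q; apply: ler_wpM2l; first exact: ltW.
    apply: (ge0_ler_powR (ltW q0)); rewrite ?nnegrE.
    - by apply: ltW; apply: rpos; apply/andP; split; lra.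
    - by apply: ltW; apply: rpos; apply/andP; split; lra.
    - by apply: rdec; lra.
  lra.
have two1 : (2 : R) - 1 = 1 by lra.
have [H [dH dHA Heq]] : exists H : R -> R,
    [/\ (forall t, 0 < t < Rad -> derivable H t 1),
        (forall t, 0 < t < Rad -> derive1 H t <= A) &
        (forall t, 0 < t < Rad -> H t = (- drho t) `^ q)].
  have [p2|p2] := eqVneq p 2.
  - exists (- rp); split.
    + by move=> t ht; apply: derivableN; exact: drp1.
    + move=> t ht; have := bound t ht.
      rewrite p2 subrr powRr0 /q p2 two1 mulr1 mul1r.
      have hd : is_derive t 1 (- rp) (- rpp t).
        apply: is_deriveN; rewrite /rpp derive1E; exact: derivableP (drp1 t ht).
      by rewrite derive1E derive_val.
    + move=> t ht; rewrite /q p2 two1 powRr1 ?hw // -drhoE //.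
  - have wpos : forall t, 0 < t < Rad -> 0 < - rp t.
      move=> t ht.
      have hw' : 0 <= - rp t by rewrite /rp drhoE //; exact: hw.
      rewrite lt_neqAle hw' andbT; apply/negP => /eqP w0.
      have o := ode t ht.
      rewrite -(drhoE t ht) -/rp -w0 in o.
      have p20 : p - 2 != 0 by rewrite subr_eq0.
      have p10 : p - 1 != 0 by rewrite subr_eq0; apply/negP => /eqP h; move: p1; rewrite h ltxx.
      rewrite !powR0 // !(mulr0, mul0r, addr0) in o.
      have : 0 < ell * rho t `^ (p - 1).
        apply: mulr_gt0 => //; apply: powR_gt0; apply: rpos.
        by move: ht => /andP[t0 tR]; rewrite !ltW.
      by rewrite -o ltxx.
    have hdf : forall t, 0 < t < Rad -> is_derive t 1 (- rp) (- rpp t).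
      move=> t ht; apply: is_deriveN; rewrite /rpp derive1E; exact: derivableP (drp1 t ht).
    have hdg : forall t, 0 < t < Rad -> derivable (@powR R ^~ q) ((- rp) t) 1.
      by move=> t ht; apply: derivable_powR; rewrite in_itv /= andbT; exact: wpos.
    have hdf' : forall t, 0 < t < Rad -> derivable (- rp) t 1.
      by move=> t ht; have := hdf t ht => hh; exact: ex_derive.
    exists ((@powR R ^~ q) \o (- rp)); split.
    + move=> t ht; apply/derivable1_diffP; apply: differentiable_comp;
        apply/derivable1_diffP; [exact: hdf' | exact: hdg].
    + move=> t ht; rewrite derive1_comp; [|exact: hdf'|exact: hdg].
      rewrite powR_derive1; last by rewrite in_itv /= andbT; exact: wpos.
      have hh := hdf t ht.
      rewrite (derive1E (- rp)) derive_val /=.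
      have -> : q - 1 = p - 2 by rewrite /q; ring.
      exact: bound.
    + by move=> t ht; rewrite /= -drhoE.
have keyr : forall r, 0 < r < Rad -> (- drho r) `^ q <= A * r.
  move=> r hr; exact: (@key_bound _ H drho Rad A q R0 q0 A0 cdrho d0 hw dH dHA Heq r hr).
have p10 : p - 1 != 0 by rewrite subr_eq0; apply/negP => /eqP h; move: p1; rewrite h ltxx.
set YR := rho Rad `^ q.
have YR0 : 0 < YR by apply: powR_gt0; apply: rpos; apply/andP; split; lra.
set fR := fquot p rho drho Rad.
have c1 : 0 <= A / YR by apply: divr_ge0 => //; exact: ltW.
have c2 : 0 <= `|fR| / Rad by apply: divr_ge0 => //; exact: ltW.
exists (A / YR + `|fR| / Rad + 1); split; first lra.
move=> r /andP[r0 rR].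
have [->|rn0] := eqVneq r 0.
  by rewrite /fquot d0 oppr0 powR0 // mul0r mulr0.
have [->|rnR] := eqVneq r Rad.
  have h1 : fR <= `|fR| by exact: ler_norm.
  have h2 : `|fR| = `|fR| / Rad * Rad by rewrite divfK // gt_eqF.
  have h3 : 0 <= (A / YR + 1) * Rad by apply: mulr_ge0; lra.
  rewrite -/fR; lra.
have hr : 0 < r < Rad by apply/andP; split; rewrite lt_neqAle ?rn0 ?rnR ?r0 ?rR // eq_sym rn0.
have hX := keyr r hr.
set X := (- drho r) `^ q in hX.
set Y := rho r `^ q.
have YRY : YR <= Y.
  rewrite /YR /Y; apply: (ge0_ler_powR (ltW q0)); rewrite ?nnegrE.
  - by apply: ltW; apply: rpos; apply/andP; split; lra.
  - by apply: ltW; apply: rpos; apply/andP; split; lra.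
  - by apply: rdec; lra.
have Y0 : 0 < Y by lra.
rewrite /fquot -/q -/X -/Y ler_pdivrMr //.
have e1 : A * r = (A / YR) * r * YR by field; rewrite gt_eqF.
have e2 : (A / YR) * r * YR <= (A / YR) * r * Y.
  by apply: ler_wpM2l => //; apply: mulr_ge0 => //; lra.
have e3 : (A / YR) * r * Y <= (A / YR + `|fR| / Rad + 1) * r * Y.
  apply: ler_wpM2r; first lra.
  apply: ler_wpM2r; lra.
lra.
Qed.
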